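(* Let $L\in\mathbb N$, $L\ge2$, ${\bf A}\in\mathbb R^{M\times N}$, ${\bf b}\in\mathbb R^M$, and let $(r,{\bf u})$ follow the weight-normalized gradient flow with learning rates $\eta_r(t)=r(t)^2$, $\eta_{\bf u}=1$, with $r(0)>0$, ${\bf u}(0)>0$, $\|{\bf u}(0)\|_2=1$. Put ${\bf x}=\frac{r}{\|{\bf u}\|_2}{\bf u}$ and $\tilde{\bf x}={\bf x}^{\odot L}$. Define $F:\mathbb R_+^N\to\mathbb R$ by $F(\tilde{\bf x})=\frac12\langle\tilde{\bf x}\odot\log(\tilde{\bf x})-\tilde{\bf x},\mathbf 1\rangle$ if $L=2$ (with $0\log0=0$) and $F(\tilde{\bf x})=\frac{L}{2(2-L)}\langle\tilde{\bf x}^{\odot\frac2L},\mathbf 1\rangle$ if $L>2$, and its Bregman divergence $D_F({\bf p},{\bf q})=F({\bf p})-F({\bf q})-\langle\nabla F({\bf q}),{\bf p}-{\bf q}\rangle$. Then for every ${\bf z}\ge0$ with ${\bf A}{\bf z}={\bf b}$, $$\partial_t D_F({\bf z},\tilde{\bf x}(t))=-2L\,\|{\bf x}(t)\|_2^2\,\mathcal L({\bf x}(t)).$$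
   Context: $\odot$ denotes entrywise product/power, $\log$ acts entrywise, vector inequalities are entrywise, $\mathbf 1$ is the all-ones vector, $\mathbb R_+=[0,\infty)$. Loss: $\mathcal L({\bf x})=\frac{1}{2L}\|{\bf A}{\bf x}^{\odot L}-{\bf b}\|_2^2$. Weight-normalized loss $\tilde{\mathcal L}(r,{\bf u})=\mathcal L\big(\frac{r}{\|{\bf u}\|_2}{\bf u}\big)$. Weight-normalized gradient flow: $\partial_t r=-\eta_r\nabla_r\tilde{\mathcal L}(r,{\bf u})$, $\partial_t{\bf u}=-\eta_{\bf u}\nabla_{\bf u}\tilde{\mathcal L}(r,{\bf u})$, $r(0)=r_0$, ${\bf u}(0)={\bf u}_0$. *)

(* Defs.v *)
From HB Require Import structures.
From mathcomp Require Import all_boot all_order all_algebra.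
From mathcomp Require Import all_classical all_reals all_analysis.
Set Implicit Arguments. Unset Strict Implicit. Unset Printing Implicit Defensive.
Import Order.TTheory GRing.Theory Num.Theory.
Import numFieldNormedType.Exports.
Local Open Scope ring_scope.

Section Defs.
Variable R : realType.

Definition norm2 {N : nat} (v : 'cV[R]_N) : R := Num.sqrt (\sum_i v i 0 ^+ 2).

Definition epow {N : nat} (L : nat) (v : 'cV[R]_N) : 'cV[R]_N :=
  map_mx (fun a => a ^+ L) v.

Definition loss {M N : nat} (L : nat) (A : 'M[R]_(M, N)) (b : 'cV[R]_M)
  (x : 'cV[R]_N) : R :=
  (2 * L%:R)^-1 * \sum_j ((A *m epow L x - b) j 0) ^+ 2.

Definition wn {N : nat} (r : R) (u : 'cV[R]_N) : 'cV[R]_N := (r / norm2 u) *: u.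

Definition Ltilde {M N : nat} (L : nat) (A : 'M[R]_(M, N)) (b : 'cV[R]_M)
  (r : R) (u : 'cV[R]_N) : R := loss L A b (wn r u).

Definition partial {N : nat} (f : 'cV[R]_N -> R) (i : 'I_N) (v : 'cV[R]_N) : R :=
  derive1 (fun s : R => f (v + s *: delta_mx i 0)) 0.

Definition grad_r {M N : nat} (L : nat) (A : 'M[R]_(M, N)) (b : 'cV[R]_M)
  (r : R) (u : 'cV[R]_N) : R := derive1 (fun s : R => Ltilde L A b s u) r.

Definition grad_u {M N : nat} (L : nat) (A : 'M[R]_(M, N)) (b : 'cV[R]_M)
  (r : R) (u : 'cV[R]_N) (i : 'I_N) : R := partial (Ltilde L A b r) i u.

Definition xlogx (a : R) : R := if a == 0 then 0 else a * ln a.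

Definition Fpot {N : nat} (L : nat) (v : 'cV[R]_N) : R :=
  if L == 2%N then 2^-1 * \sum_i (xlogx (v i 0) - v i 0)
  else L%:R / (2 * (2 - L%:R)) * \sum_i powR (v i 0) (2 / L%:R).

Definition bregman {N : nat} (L : nat) (p q : 'cV[R]_N) : R :=
  Fpot L p - Fpot L q - \sum_i partial (Fpot L) i q * (p i 0 - q i 0).

End Defs.

(* Main.v *)
Require Import Defs.
From HB Require Import structures.
From mathcomp Require Import all_boot all_order all_algebra.
From mathcomp Require Import all_classical all_reals all_analysis.
From mathcomp Require Import ring lra zify.
Import Order.TTheory GRing.Theory Num.Theory.
Import numFieldNormedType.Exports.
Local Open Scope classical_set_scope.
Local Open Scope ring_scope.

Section Wrap.
Context {R : realType}.
Implicit Types (f g : R -> R) (x df dg d : R).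

Lemma isd_val {f x d} : is_derive x 1 f d -> derivable f x 1 /\ derive1 f x = d.
Proof. by move=> H; split; [case: H|rewrite derive1E derive_val]. Qed.

Lemma isd_of {f x} : derivable f x 1 -> is_derive x 1 f (derive1 f x).
Proof. by move=> H; rewrite derive1E; apply: derivableP. Qed.

Lemma isd_cst (c x : R) : is_derive x 1 (fun _ : R => c) 0.
Proof. exact: is_derive_cst. Qed.

Lemma isd_id x : is_derive x 1 (fun s : R => s) 1.
Proof. exact: is_derive_id. Qed.

Lemma isd_add {f g x df dg} : is_derive x 1 f df -> is_derive x 1 g dg ->
  is_derive x 1 (fun s => f s + g s) (df + dg).
Proof. move=> ? ?; exact: is_deriveD. Qed.

Lemma isd_sub {f g x df dg} : is_derive x 1 f df -> is_derive x 1 g dg ->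
  is_derive x 1 (fun s => f s - g s) (df - dg).
Proof. move=> ? ?; exact: is_deriveB. Qed.

Lemma isd_opp {f x df} : is_derive x 1 f df ->
  is_derive x 1 (fun s => - f s) (- df).
Proof. move=> ?; exact: is_deriveN. Qed.

Lemma isd_mul {f g x df dg} : is_derive x 1 f df -> is_derive x 1 g dg ->
  is_derive x 1 (fun s => f s * g s) (f x * dg + g x * df).
Proof. move=> ? ?; exact: is_deriveM. Qed.

Lemma isd_scal (c : R) {f x df} : is_derive x 1 f df ->
  is_derive x 1 (fun s => c * f s) (c * df).
Proof.
move=> H; have := isd_mul (isd_cst c x) H.
by rewrite mulr0 addr0.
Qed.

Lemma isd_ext {f g x df dg} : is_derive x 1 f df ->
  (forall s, f s = g s) -> df = dg -> is_derive x 1 g dg.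
Proof. by move=> + /funext <- <-. Qed.

Lemma isd_exp {f x df} n : is_derive x 1 f df ->
  is_derive x 1 (fun s => f s ^+ n) (n%:R * f x ^+ n.-1 * df).
Proof.
move=> H; elim: n => [|n IH].
  eapply isd_ext; [exact: (isd_cst 1 x)| move=> s; by rewrite expr0 | by rewrite !mul0r].  
eapply isd_ext; [exact: (isd_mul H IH)| |]; first by move=> s; rewrite exprS.
case: n {IH} => [|n]; first by rewrite /= !expr0; ring.
rewrite /= -!natr1 !exprS; ring.
Qed.

Lemma isd_sum {n} {h : 'I_n -> R -> R} {x} {dh : 'I_n -> R} :
  (forall i, is_derive x 1 (h i) (dh i)) ->
  is_derive x 1 (fun s => \sum_(i < n) h i s) (\sum_(i < n) dh i).
Proof.
move=> H; have := is_derive_sum H.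
by rewrite (_ : \sum_(i < n) h i = (fun s => \sum_(i < n) h i s)) //;
  apply/funext => s; rewrite fct_sumE.
Qed.

Lemma isd_comp {f g x df dg} : is_derive (g x) 1 f df -> is_derive x 1 g dg ->
  is_derive x 1 (fun s => f (g s)) (df * dg).
Proof. move=> ? ?; exact: is_derive1_comp. Qed.

Lemma isd_inv {f x df} : f x != 0 -> is_derive x 1 f df ->
  is_derive x 1 (fun s => (f s)^-1) (- (f x) ^- 2 * df).
Proof. move=> ? ?; exact: is_deriveV. Qed.

Lemma isd_near {f g x df} : (\forall s \near x, f s = g s) ->
  is_derive x 1 f df -> is_derive x 1 g df.
Proof. move=> H; exact: near_eq_is_derive. Qed.

End Wrap.

Ltac isdx H := eapply isd_ext; [exact: H| |].



Section Loss.
Context {R : realType} {M N : nat} (L : nat) (A : 'M[R]_(M, N)) (b : 'cV[R]_M).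

Definition ev (x : 'cV[R]_N) (j : 'I_M) : R := \sum_k A j k * x k 0 ^+ L - b j 0.
Definition hh (x : 'cV[R]_N) (k : 'I_N) : R := \sum_j A j k * ev x j.

Lemma ev_E x j : (A *m epow L x - b) j 0 = ev x j.
Proof. by rewrite !mxE; congr (_ - _); apply: eq_bigr => k _; rewrite mxE. Qed.

Lemma loss_E x : loss L A b x = (2 * L%:R)^-1 * \sum_j ev x j ^+ 2.
Proof. by rewrite /loss; congr (_ * _); apply: eq_bigr => j _; rewrite ev_E. Qed.

Lemma ev_isd {y : R -> 'cV[R]_N} {s0 : R} {dy : 'I_N -> R} (j : 'I_M) :
  (forall k, is_derive s0 1 (fun s => y s k 0) (dy k)) ->
  is_derive s0 1 (fun s => ev (y s) j)
     (\sum_k A j k * (L%:R * y s0 k 0 ^+ L.-1 * dy k)).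
Proof.
move=> H; rewrite /ev.
isdx (isd_sub (isd_sum (fun k => isd_scal (A j k) (isd_exp L (H k))))
  (isd_cst (b j 0) s0)) => //.
by rewrite subr0.
Qed.

Lemma loss_isd {y : R -> 'cV[R]_N} {s0 : R} {dy : 'I_N -> R} : (0 < L)%N ->
  (forall k, is_derive s0 1 (fun s => y s k 0) (dy k)) ->
  is_derive s0 1 (fun s => loss L A b (y s))
     (\sum_k y s0 k 0 ^+ L.-1 * hh (y s0) k * dy k).
Proof.
move=> L0 H.
have H2 := isd_scal (2 * L%:R)^-1 (isd_sum (fun j => isd_exp 2 (ev_isd j H))).
isdx H2; first by move=> s; rewrite loss_E.
have L0' : (L%:R : R) != 0 by rewrite pnatr_eq0 -lt0n.
rewrite big_distrr /=.
under eq_bigr do rewrite big_distrr /= big_distrr /=.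
rewrite exchange_big /=; apply: eq_bigr => k _.
rewrite /hh big_distrr /= big_distrl /=; apply: eq_bigr => j _.
by field.
Qed.

End Loss.


Section Grads.
Context {R : realType} {M N : nat} (L : nat) (A : 'M[R]_(M, N)) (b : 'cV[R]_M).
Hypothesis L0 : (0 < L)%N.

Lemma wnE (r : R) (u : 'cV[R]_N) k : wn r u k 0 = r / norm2 u * u k 0.
Proof. by rewrite /wn mxE. Qed.

Lemma grad_r_E (r : R) (u : 'cV[R]_N) : grad_r L A b r u =
  \sum_k (wn r u k 0) ^+ L.-1 * hh L A b (wn r u) k * (u k 0 / norm2 u).
Proof.
have H k : is_derive r 1 (fun s : R => wn s u k 0) (u k 0 / norm2 u).
  isdx (isd_scal (u k 0 / norm2 u) (isd_id r)).
    by move=> s; rewrite wnE; ring.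
  by rewrite mulr1.
have := loss_isd L A b L0 H; move/isd_val => [_ <-].
done.
Qed.

Lemma sum_delta (u : 'cV[R]_N) i :
  \sum_j u j 0 * (delta_mx i 0 : 'cV[R]_N) j 0 = u i 0.
Proof.
rewrite (bigD1 i) //= big1 ?addr0; first by rewrite mxE !eqxx mulr1.
by move=> j /negbTE ji; rewrite mxE ji mulr0.
Qed.

Lemma norm2_isd (u : 'cV[R]_N) i : 0 < norm2 u ->
  is_derive (0:R) 1 (fun e : R => norm2 (u + e *: delta_mx i 0)) (u i 0 / norm2 u).
Proof.
move=> n0.
pose d j := (delta_mx i 0 : 'cV[R]_N) j 0.
have Hin : is_derive (0:R) 1 (fun e : R => \sum_j (u j 0 + e * d j) ^+ 2)
    (\sum_j (2%:R * (u j 0 + 0 * d j) ^+ 1 * (0 + (0 * 0 + d j * 1)))).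
  apply: isd_sum => j.
  exact: (isd_exp 2 (isd_add (isd_cst (u j 0) 0) (isd_mul (isd_id 0) (isd_cst (d j) 0)))).
have sq : \sum_j (u j 0 + 0 * d j) ^+ 2 = norm2 u ^+ 2.
  by rewrite /norm2 sqr_sqrtr ?sumr_ge0 // => *; [apply: eq_bigr => j _; rewrite mul0r addr0|rewrite sqr_ge0].
have pos : 0 < \sum_j (u j 0 + 0 * d j) ^+ 2 by rewrite sq exprn_gt0.
have Hs := is_derive1_sqrt pos.
have := isd_comp Hs Hin.
move=> H; isdx H.
  by move=> e /=; rewrite /norm2; congr (Num.sqrt _); apply: eq_bigr => j _; rewrite /d !mxE.
rewrite sq sqrtr_sqr gtr0_norm //.
have -> : \sum_j 2%:R * (u j 0 + 0 * d j) ^+ 1 * (0 + (0 * 0 + d j * 1)) = 2 * u i 0.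
  rewrite -(sum_delta u i) big_distrr /=; apply: eq_bigr => j _; rewrite /d; ring.
by field; rewrite gt_eqF.
Qed.

Lemma grad_u_E (r : R) (u : 'cV[R]_N) i : 0 < norm2 u ->
  grad_u L A b r u i =
  \sum_k (wn r u k 0) ^+ L.-1 * hh L A b (wn r u) k *
     (r * ((delta_mx i 0 : 'cV[R]_N) k 0 / norm2 u - u i 0 * u k 0 / norm2 u ^+ 3)).
Proof.
move=> n0.
set n := norm2 u.
pose d j := (delta_mx i 0 : 'cV[R]_N) j 0.
have Hn := norm2_isd u i n0.
have Hn0 : norm2 (u + 0 *: delta_mx i 0) != 0 by rewrite scale0r addr0 gt_eqF.
have H k : is_derive (0:R) 1 (fun e : R => wn r (u + e *: delta_mx i 0) k 0)
    (r * (d k / n - u i 0 * u k 0 / n ^+ 3)).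
  have Hk := isd_add (isd_cst (u k 0) 0) (isd_mul (isd_id 0) (isd_cst (d k) 0)).
  isdx (isd_scal r (isd_mul (@isd_inv _ (fun e : R => norm2 (u + e *: delta_mx i 0)) 0 _ Hn0 Hn) Hk)).
    by move=> e /=; rewrite wnE /d !mxE; ring.
  rewrite /= scale0r addr0 -/n; field; by rewrite gt_eqF.
have := loss_isd L A b L0 H; move/isd_val => [_].
rewrite scale0r addr0 => <-.
done.
Qed.

End Grads.


Lemma near_pos {R : realType} (a : R) : 0 < a -> \forall s \near a, 0 < s.
Proof. move=> a0. exact: (@cvgr_gt R R (nbhs a) _ id a (@cvg_id _ _) 0 a0). Qed.

Section Pot.
Context {R : realType} (L : nat).
Hypothesis L2 : (2 <= L)%N.

Definition CC : R := L%:R / (2 * (2 - L%:R)).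
Definition pp : R := 2 / L%:R.
Definition F1 (a : R) : R :=
  if L == 2%N then 2^-1 * (xlogx a - a) else CC * powR a pp.
Definition dF (a : R) : R :=
  if L == 2%N then 2^-1 * ln a else CC * (pp * powR a (pp - 1)).
Definition ddF (a : R) : R :=
  if L == 2%N then 2^-1 * a^-1 else CC * (pp * ((pp - 1) * powR a (pp - 1 - 1))).

Lemma Fpot_E {N} (q : 'cV[R]_N) : Fpot L q = \sum_i F1 (q i 0).
Proof.
rewrite /Fpot /F1; case: ifP => _; rewrite big_distrr //.
Qed.

Lemma F1_isd (a : R) : 0 < a -> is_derive a 1 F1 (dF a).
Proof.
move=> a0; rewrite /F1 /dF; case: ifP => _.
  have H := isd_scal (2^-1 : R) (isd_sub (isd_mul (isd_id a) (is_derive1_ln a0)) (isd_id a)).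
  rewrite mulfV ?gt_eqF // mulr1 addrC addKr in H.
  eapply isd_near; [|exact: H].
  near=> s; rewrite /xlogx /= gt_eqF //.
  by near: s; exact: near_pos.
apply: (isd_scal CC).
exact: is_derive1_powR.
Unshelve. all: by end_near. Qed.

Lemma dF_isd (a : R) : 0 < a -> is_derive a 1 dF (ddF a).
Proof.
move=> a0; rewrite /dF /ddF; case: ifP => _.
  exact: (isd_scal (2^-1 : R) (is_derive1_ln a0)).
apply: (isd_scal CC); apply: (isd_scal pp).
exact: is_derive1_powR.
Qed.

Lemma ddF_id (y : R) : 0 < y -> ddF (y ^+ L) * y ^+ (2 * L - 2) = L%:R^-1.
Proof.
move=> y0; rewrite /ddF; case: ifP => [/eqP ->|L2'].
  by rewrite /= -mulrA mulVf ?mulr1 // expf_neq0 // gt_eqF.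
have L3 : (2 < L)%N by rewrite ltn_neqAle eq_sym L2' L2.
have Ln0 : (L%:R : R) != 0 by rewrite pnatr_eq0 -lt0n (ltn_trans _ L3).
have L2n0 : (2 - L%:R : R) != 0.
  by rewrite subr_eq0 lt_eqF // (ltr_nat R 2 L).
have ge0 : 0 <= y by apply: ltW.
rewrite -!powR_mulrn // -powRrM -mulrA -mulrA -mulrA.
rewrite -powRD; last by apply/implyP => _; rewrite gt_eqF.
have -> : L%:R * (pp - 1 - 1) + (2 * L - 2)%:R = 0 :> R.
  rewrite natrB; last by rewrite leq_pmulr // ltnW.
  rewrite natrM /pp; field.
  exact: Ln0.
rewrite powRr0 mulr1 /CC /pp; field.
by rewrite Ln0 L2n0.
Qed.

Lemma sum_delta_f {N} (f : 'I_N -> R) i :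
  \sum_j f j * (delta_mx i 0 : 'cV[R]_N) j 0 = f i.
Proof.
rewrite (bigD1 i) //= big1 ?addr0; first by rewrite mxE !eqxx mulr1.
by move=> j /negbTE ji; rewrite mxE ji mulr0.
Qed.

Lemma partial_Fpot {N} (q : 'cV[R]_N) i : (forall j, 0 < q j 0) ->
  partial (Fpot L) i q = dF (q i 0).
Proof.
move=> qpos; rewrite /partial.
pose d j := (delta_mx i 0 : 'cV[R]_N) j 0.
have H : is_derive (0:R) 1 (fun s : R => \sum_j F1 (q j 0 + s * d j))
   (\sum_j (dF (q j 0) * (0 + (0 * 0 + d j * 1)))).
  apply: isd_sum => j.
  have Hin := isd_add (isd_cst (q j 0) 0) (isd_mul (isd_id (0:R)) (isd_cst (d j) 0)).
  have Ho : is_derive (q j 0 + 0 * d j) 1 F1 (dF (q j 0)).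
    by rewrite mul0r addr0; apply: F1_isd.
  exact (@isd_comp R F1 (fun s => q j 0 + s * d j) 0 _ _ Ho Hin).
have H2 : is_derive (0:R) 1 (fun s => Fpot L (q + s *: delta_mx i 0)) (dF (q i 0)).
  isdx H.
    by move=> s /=; rewrite Fpot_E; apply: eq_bigr => j _; rewrite /d !mxE.
  rewrite -(sum_delta_f (fun j => dF (q j 0)) i); apply: eq_bigr => j _.
  by rewrite /d; ring.
by have [_ ->] := isd_val H2.
Qed.

End Pot.


Section Gen.
Context {R : realType}.

Lemma near_delta (x : R) (P : R -> Prop) : (\forall s \near x, P s) ->
  exists2 d : R, 0 < d & forall s, `|s - x| < d -> P s.
Proof.
move=> /nbhs_ballP [d d0 H]; exists d => // s sx; apply: H.
by rewrite /ball /= distrC.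
Qed.

Lemma near_right_delta (x : R) (P : R -> Prop) : (\forall s \near x^'+, P s) ->
  exists2 d : R, 0 < d & forall s, x < s < x + d -> P s.
Proof.
move=> /nbhs_ballP [d d0 H]; exists d => // s /andP[xs sd]; apply: H => /=.
  by rewrite /ball /= ltr0_norm ?subr_lt0 // opprB ltrBlDl.
done.
Qed.

Lemma cont_near_pos (f : R -> R) (c : R) : {for c, continuous f} -> 0 < f c ->
  \forall s \near c, 0 < f s.
Proof. move=> H fc; exact: (@cvgr_gt R R (nbhs c) _ f (f c) H 0 fc). Qed.

Lemma der_cont (f : R -> R) (c : R) : derivable f c 1 -> {for c, continuous f}.
Proof. by move=> H; apply/differentiable_continuous; rewrite -derivable1_diffP. Qed.

Lemma const_on (f : R -> R) (a c : R) : a <= c -> {within `[a, c], continuous f} ->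
  (forall s, a < s < c -> is_derive s 1 f 0) -> f c = f a.
Proof.
move=> ac cf H.
have Hd : forall x, x \in `]a, c[%R -> is_derive x 1 f ((fun _ => 0 : R) x).
  by move=> x; rewrite in_itv /= => /H.
have [x _] := @MVT_segment R f (fun _ => 0) a c ac Hd cf.
by rewrite mul0r => /eqP; rewrite subr_eq0 => /eqP.
Qed.

Lemma pos_persist (f k : R -> R) (a c : R) : a < c ->
  {within `[a, c], continuous f} -> {within `[a, c], continuous k} ->
  (forall s, a < s < c -> is_derive s 1 f (f s * k s)) ->
  (forall s, a <= s < c -> 0 < f s) -> 0 < f c.
Proof.
move=> ac cf ck Hd Hp.
have [m mi km] := EVT_min (ltW ac) ck.
pose g s := f s * expR (- k m * s).
have ed (s : R) : is_derive s 1 (fun s => expR (- k m * s)) (expR (- k m * s) * (- k m * 1)).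
  exact: (isd_comp (is_derive_expR _) (isd_scal (- k m) (isd_id s))).
have gd (s : R) : a < s < c -> is_derive s 1 g (f s * expR (- k m * s) * (k s - k m)).
  move=> sac; isdx (isd_mul (Hd s sac) (ed s)); [by []|rewrite /=; ring].
have gc : {within `[a, c], continuous g}.
  move=> x; apply: (@continuousM R _ (from_subspace `[a, c] f) (from_subspace `[a, c] (fun s => expR (- k m * s))) x); first exact: cf.
  by apply: continuous_subspaceT => y; apply: der_cont; case: (ed y).
have gle : g a <= g c.
  apply: (@ger0_derive1_le_cc R g a c).
  - by move=> x; rewrite in_itv /= => /gd [].
  - move=> x; rewrite in_itv /= => xi; have [_ ->] := isd_val (gd x xi).
    case/andP: xi => ax xc.
    rewrite mulr_ge0 // ?subr_ge0; last by apply: km; rewrite in_itv /= !ltW.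
    by rewrite ltW // mulr_gt0 ?expR_gt0 // Hp // ltW // ax.
  - exact: gc.
  - by rewrite in_itv /= lexx ltW.
  - by rewrite in_itv /= lexx ltW.
  - exact: ltW.
have : 0 < g a by rewrite /g mulr_gt0 ?expR_gt0 // Hp // lexx ac.
move=> /lt_le_trans /(_ gle); rewrite /g pmulr_lgt0 // expR_gt0 //.
Qed.

End Gen.


Lemma sum_delta2 {R : realType} {N} (f : 'I_N -> R) k :
  \sum_i f i * (delta_mx i 0 : 'cV[R]_N) k 0 = f k.
Proof.
rewrite (bigD1 k) //= big1 ?addr0; first by rewrite mxE !eqxx mulr1.
by move=> j /negbTE jk; rewrite mxE eq_sym jk mulr0.
Qed.

Section Flow.
Context {R : realType} {M N : nat} (L : nat) (A : 'M[R]_(M, N)) (b : 'cV[R]_M)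
  (r : R -> R) (u : R -> 'cV[R]_N).
Hypothesis HL : (2 <= L)%N.
Hypothesis Hr : forall t : R, 0 < t ->
     derivable r t 1 /\
     derive1 r t = - (r t ^+ 2 * grad_r L A b (r t) (u t)).
Hypothesis Hu : forall t : R, 0 < t -> forall i : 'I_N,
     derivable (fun s => u s i 0) t 1 /\
     derive1 (fun s => u s i 0) t = - grad_u L A b (r t) (u t) i.

Let L0 : (0 < L)%N. Proof. exact: ltnW. Qed.

Definition S2 (s : R) : R := \sum_i u s i 0 ^+ 2.
Definition Gf (s : R) : R :=
  \sum_k (r s * u s k 0) ^+ L.-1 * hh L A b (r s *: u s) k * u s k 0.
Definition kr (s : R) : R := - (r s * Gf s).
Definition ku (i : 'I_N) (s : R) : R :=
  - (r s ^+ L * u s i 0 ^+ (L - 2) * hh L A b (r s *: u s) i) + r s * Gf s.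

Lemma dr {s : R} : 0 < s -> is_derive s 1 r (- (r s ^+ 2 * grad_r L A b (r s) (u s))).
Proof. by move=> s0; have [d <-] := Hr s s0; exact: isd_of. Qed.

Lemma du {s : R} i : 0 < s ->
  is_derive s 1 (fun t => u t i 0) (- grad_u L A b (r s) (u s) i).
Proof. by move=> s0; have [d <-] := Hu s s0 i; exact: isd_of. Qed.

Lemma ex_der (f : R -> R) (s : R) : (exists d, is_derive s 1 f d) -> derivable f s 1.
Proof. by case=> d []. Qed.

Lemma hh_der {s : R} k : 0 < s -> derivable (fun t => hh L A b (r t *: u t) k) s 1.
Proof.
move=> s0.
have H : forall j, is_derive s 1 (fun t => (r t *: u t) j 0)
   (r s * (- grad_u L A b (r s) (u s) j) + u s j 0 * (- (r s ^+ 2 * grad_r L A b (r s) (u s)))).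
  by move=> j; isdx (isd_mul (dr s0) (du j s0)); first by move=> t /=; rewrite mxE.
apply: ex_der; eexists; rewrite /hh; apply: isd_sum => j; apply: isd_scal.
exact: (ev_isd L A b j H).
Qed.

Lemma r_der {s : R} : 0 < s -> derivable r s 1.
Proof. by move=> s0; case: (Hr s s0). Qed.
Lemma u_der {s : R} k : 0 < s -> derivable (fun t => u t k 0) s 1.
Proof. by move=> s0; case: (Hu s s0 k). Qed.

Lemma Gf_der {s : R} : 0 < s -> derivable Gf s 1.
Proof.
move=> s0; rewrite /Gf; apply: ex_der; eexists; apply: isd_sum => k.
have H1 := isd_of (hh_der k s0).
have H2 := isd_of (u_der k s0).
have H3 := isd_of (r_der s0).
exact (isd_mul (isd_mul (isd_exp _ (isd_mul H3 H2)) H1) H2).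
Qed.

Lemma kr_der {s : R} : 0 < s -> derivable kr s 1.
Proof.
move=> s0; apply: ex_der; eexists.
exact (isd_opp (isd_mul (isd_of (r_der s0)) (isd_of (Gf_der s0)))).
Qed.

Lemma ku_der {s : R} i : 0 < s -> derivable (ku i) s 1.
Proof.
move=> s0; apply: ex_der; eexists.
have H1 := isd_of (hh_der i s0).
have H2 := isd_of (u_der i s0).
have H3 := isd_of (r_der s0).
exact (isd_add (isd_opp (isd_mul (isd_mul (isd_exp _ H3) (isd_exp _ H2)) H1))
   (isd_mul H3 (isd_of (Gf_der s0)))).
Qed.

Lemma S2_der {s : R} : 0 < s -> derivable S2 s 1.
Proof.
move=> s0; apply: ex_der; eexists; apply: isd_sum => k.
exact (isd_exp 2 (isd_of (u_der k s0))).
Qed.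

Lemma S2_isd {s : R} : 0 < s -> 0 < norm2 (u s) -> is_derive s 1 S2 0.
Proof.
move=> s0 n0.
isdx (isd_sum (fun k => isd_exp 2 (du k s0))); first by [].
set n := norm2 (u s).
have nS : n ^+ 2 = \sum_i u s i 0 ^+ 2.
  by rewrite /n /norm2 sqr_sqrtr // sumr_ge0 // => i _; rewrite sqr_ge0.
have nn0 : n != 0 by rewrite gt_eqF.
pose X k := (wn (r s) (u s) k 0) ^+ L.-1 * hh L A b (wn (r s) (u s)) k.
have E : forall i : 'I_N, 2%:R * u s i 0 ^+ 2.-1 * - grad_u L A b (r s) (u s) i =
    \sum_k (-2 * r s * X k) * (u s i 0 * ((delta_mx i 0 : 'cV[R]_N) k 0 / n
           - u s i 0 * u s k 0 / n ^+ 3)).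
  move=> i; rewrite grad_u_E // mulrN -mulNr big_distrr /=; apply: eq_bigr => k _.
  by rewrite /X -/n; ring.
rewrite (eq_bigr _ (fun i _ => E i)) exchange_big /=; apply: big1 => k _.
rewrite -big_distrr /=.
have -> : \sum_i u s i 0 * ((delta_mx i 0 : 'cV[R]_N) k 0 / n - u s i 0 * u s k 0 / n ^+ 3)
    = (\sum_i u s i 0 * (delta_mx i 0 : 'cV[R]_N) k 0) / n
      - (\sum_i u s i 0 ^+ 2) * (u s k 0 / n ^+ 3).
  rewrite big_distrl big_distrl -sumrB /=; apply: eq_bigr => i _; ring.
by rewrite sum_delta2 -nS; field; rewrite nn0.
Qed.

Lemma norm2_S2 (s : R) : norm2 (u s) = Num.sqrt (S2 s).
Proof. by []. Qed.

Lemma S2_ge0 (s : R) : 0 <= S2 s.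
Proof. by rewrite sumr_ge0 // => i _; rewrite sqr_ge0. Qed.

Lemma pos_S2 (s : R) (i : 'I_N) : (forall j, 0 < u s j 0) -> 0 < S2 s.
Proof.
move=> H; rewrite /S2 (bigD1 i) //=.
have h1 : 0 < u s i 0 ^+ 2 by rewrite exprn_gt0.
have h2 : 0 <= \sum_(j | j != i) u s j 0 ^+ 2 by rewrite sumr_ge0 // => j _; rewrite sqr_ge0.
lra.
Qed.

Lemma dyn1 {s : R} : 0 < s -> S2 s = 1 ->
  is_derive s 1 r (r s * kr s) /\ forall i, is_derive s 1 (fun t => u t i 0) (u s i 0 * ku i s).
Proof.
move=> s0 S1.
have n1 : norm2 (u s) = 1 by rewrite norm2_S2 S1 sqrtr1.
have wE : wn (r s) (u s) = r s *: u s by rewrite /wn n1 divr1.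
have G : grad_r L A b (r s) (u s) = Gf s.
  rewrite grad_r_E // wE /Gf; apply: eq_bigr => k _; rewrite n1 divr1 mxE //.
split.
  by isdx (dr s0); rewrite // G /kr; ring.
move=> i; isdx (du i s0) => //.
rewrite grad_u_E ?n1 ?ltr01 // wE.
have -> : \sum_k (r s *: u s) k 0 ^+ L.-1 * hh L A b (r s *: u s) k *
     (r s * ((delta_mx i 0 : 'cV[R]_N) k 0 / 1 - u s i 0 * u s k 0 / 1 ^+ 3)) =
   \sum_k (r s * ((r s *: u s) k 0 ^+ L.-1 * hh L A b (r s *: u s) k)) *
      (delta_mx i 0 : 'cV[R]_N) k 0
   - r s * u s i 0 * Gf s.
  rewrite /Gf big_distrr -sumrB /=; apply: eq_bigr => k _; rewrite mxE; rewrite expr1n !divr1; ring.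
rewrite sum_delta_f mxE /ku.
case: L HL => [|[|l]] // _.
rewrite /= subn2 /= !exprS !exprMn; ring.
Qed.

End Flow.


Section Inv.
Context {R : realType} {M N : nat} (L : nat) (A : 'M[R]_(M, N)) (b : 'cV[R]_M)
  (r : R -> R) (u : R -> 'cV[R]_N).
Hypothesis HL : (2 <= L)%N.
Hypothesis Hr : forall t : R, 0 < t ->
     derivable r t 1 /\
     derive1 r t = - (r t ^+ 2 * grad_r L A b (r t) (u t)).
Hypothesis Hu : forall t : R, 0 < t -> forall i : 'I_N,
     derivable (fun s => u s i 0) t 1 /\
     derive1 (fun s => u s i 0) t = - grad_u L A b (r t) (u t) i.
Hypothesis Hr0 : r x @[x --> 0^'+] --> r 0.
Hypothesis Hu0 : forall i : 'I_N, u x i 0 @[x --> 0^'+] --> u 0 i 0.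
Hypothesis r0 : 0 < r 0.
Hypothesis u0 : forall i : 'I_N, 0 < u 0 i 0.
Hypothesis un : norm2 (u 0) = 1.

Let rD := @r_der _ _ _ L A b r u Hr.
Let uD := @u_der _ _ _ L A b r u Hu.
Let S2D := @S2_der _ _ _ L A b r u Hu.
Let S2I := @S2_isd _ _ _ L A b r u HL Hu.
Let dyn := @dyn1 _ _ _ L A b r u HL Hr Hu.
Let krD := @kr_der _ _ _ L A b r u Hr Hu.
Let kuD := @ku_der _ _ _ L A b r u Hr Hu.

Definition Pp (s : R) := 0 < r s /\ forall i, 0 < u s i 0.

Lemma S20 : S2 u 0 = 1.
Proof.
have h := S2_ge0 u 0.
by rewrite -(sqr_sqrtr h) -norm2_S2 un expr1n.
Qed.

Lemma N0 : (0 < N)%N.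
Proof.
case: N u u0 un => [|n] //= u' _; rewrite /norm2 big_ord0 sqrtr0 => /eqP.
by rewrite eq_sym oner_eq0.
Qed.

Lemma S2_lim0 : S2 u x @[x --> 0^'+] --> S2 u 0.
Proof.
rewrite /S2; apply: (@cvg_big _ _ +%R 0 xpredT add_continuous) => i _.
under eq_cvg do rewrite expr2.
rewrite expr2; exact: (cvgM (Hu0 i) (Hu0 i)).
Qed.

Lemma near0 : \forall s \near 0^'+, Pp s.
Proof.
have h1 := @cvgr_gt R R _ _ r (r 0) Hr0 0 r0.
have h2 := filter_forall _ (fun i => @cvgr_gt R R _ _ (fun x => u x i 0) (u 0 i 0) (Hu0 i) 0 (u0 i)).
near=> x; split; [near: x; exact: h1|near: x; exact: h2].
Unshelve. all: by end_near. Qed.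

Lemma nearc (c : R) : 0 < c -> Pp c -> \forall s \near c, Pp s.
Proof.
move=> c0 [rc uc].
have h1 := cont_near_pos _ _ (der_cont _ _ (rD _ c0)) rc.
have h2 := filter_forall _ (fun i => cont_near_pos _ _ (der_cont _ _ (uD _ i c0)) (uc i)).
near=> x; split; [near: x; exact: h1|near: x; exact: h2].
Unshelve. all: by end_near. Qed.

Lemma within_der (f : R -> R) (a c : R) : 0 < a ->
  (forall s, 0 < s -> derivable f s 1) -> {within `[a, c], continuous f}.
Proof.
move=> a0 H; apply: derivable_within_continuous => x; rewrite in_itv /= => /andP[ax _].
by apply: H; exact: (lt_le_trans a0 ax).
Qed.

Lemma invariant (T : R) : 0 < T -> Pp T /\ S2 u T = 1.
Proof.
move=> T0.
have P0 : Pp 0 by [].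
pose E := [set s : R | (0 <= s <= T) /\ forall s', 0 <= s' <= s -> Pp s'].
have E0 : E 0.
  split; first by rewrite lexx ltW.
  move=> s' /andP[h1 h2]; have -> : s' = 0 by apply/le_anti; rewrite h1 h2.
  exact: P0.
have ubT : ubound E T by move=> s [/andP[_ h] _].
have hE : has_sup E by split; [exists 0 | exists T].
set c := sup E.
have cT : c <= T by apply: ge_sup => //; exists 0.
have c0 : 0 <= c by apply: sup_upper_bound.
have Pbelow : forall s', 0 <= s' < c -> Pp s'.
  move=> s' /andP[h1 h2].
  have eps0 : 0 < c - s' by rewrite subr_gt0.
  have [e [_ He] lt] := @sup_adherent R E (c - s') eps0 hE.
  apply: He; rewrite h1 /= ltW //.
  by move: lt; rewrite opprB addrCA subrr addr0.
have cpos : 0 < c.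
  have [d d0 Hd] := near_right_delta _ _ near0.
  pose s1 := Num.min (d / 2) T.
  have s1p : 0 < s1 by rewrite lt_min T0 divr_gt0.
  have s1d : s1 < d by rewrite gt_min ltr_pdivrMr // ltr_pMr // ltr1n.
  have Es1 : E s1.
    split; first by rewrite ltW //= ge_min lexx orbT.
    move=> s' /andP[h1 h2]; case: (eqVneq s' 0) => [->|sn0]; first exact: P0.
    apply: Hd; rewrite add0r (le_lt_trans h2 s1d) andbT lt_neqAle eq_sym sn0 h1 //.
  by apply: lt_le_trans s1p _; apply: sup_upper_bound.
have S2c : forall s, 0 < s <= c -> S2 u s = 1.
  move=> s /andP[s0 sc].
  rewrite -S20; apply: const_on; first exact: ltW.
    apply: derivable_oo_LRcontinuous_within; split.
    - by move=> x; rewrite in_itv /= => /andP[x0 _]; exact: S2D.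
    - exact: S2_lim0.
    - exact: cvg_at_left_filter (der_cont _ _ (S2D _ s0)).
  move=> x /andP[x0 xs]; apply: S2I => //.
  have [_ ux] : Pp x by apply: Pbelow; rewrite ltW // (lt_le_trans xs sc).
  by rewrite norm2_S2 sqrtr_gt0 (pos_S2 _ _ (Ordinal N0)).
have c2 : 0 < c / 2 by rewrite divr_gt0.
have c2c : c / 2 < c by rewrite ltr_pdivrMr // ltr_pMr // ltr1n.
have inS s : c / 2 < s < c -> 0 < s /\ S2 u s = 1.
  move=> /andP[h1 h2]; have s0 : 0 < s := lt_trans c2 h1.
  by split => //; apply: S2c; rewrite s0 ltW.
have inP s : c / 2 <= s < c -> Pp s.
  by move=> /andP[h1 h2]; apply: Pbelow; rewrite h2 ltW // (lt_le_trans c2 h1).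
have Pc : Pp c.
  split.
  - apply: (pos_persist _ (kr L A b r u) _ _ c2c).
    + exact: within_der _ _ _ c2 rD.
    + exact: within_der _ _ _ c2 krD.
    + by move=> s /inS [s0 S1]; case: (dyn _ s0 S1).
    + by move=> s /inP [].
  - move=> i; apply: (pos_persist (fun t => u t i 0) (ku L A b r u i) _ _ c2c).
    + exact: within_der _ _ _ c2 (fun s => uD s i).
    + exact: within_der _ _ _ c2 (fun s => kuD s i).
    + by move=> s /inS [s0 S1]; case: (dyn _ s0 S1) => _ /(_ i).
    + by move=> s /inP [_ /(_ i)].
have cT' : c = T.
  apply/eqP; rewrite eq_le cT /= leNgt; apply/negP => cltT.
  have [d d0 Hd] := near_delta _ _ (nearc c cpos Pc).
  pose s1 := Num.min (c + d / 2) T.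
  have s1c : c < s1 by rewrite lt_min cltT andbT ltrDl divr_gt0.
  have s1d : s1 < c + d.
    by rewrite gt_min ltrD2l ltr_pdivrMr // ltr_pMr // ltr1n.
  have Es1 : E s1.
    split; first by rewrite (le_trans c0 (ltW s1c)) /= ge_min lexx orbT.
    move=> s' /andP[h1 h2]; case: (ltP s' c) => [sc|cs]; first by apply: Pbelow; rewrite h1.
    apply: Hd; rewrite ger0_norm ?subr_ge0 // ltrBlDl.
    exact: le_lt_trans h2 s1d.
  have := sup_upper_bound hE Es1; rewrite -/c => /(lt_le_trans s1c).
  by rewrite ltxx.
rewrite -cT'; split; first exact: Pc.
by apply: S2c; rewrite cpos lexx.
Qed.

End Inv.


Section Final.
Context {R : realType} {M N : nat} (L : nat) (A : 'M[R]_(M, N)) (b : 'cV[R]_M)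
  (r : R -> R) (u : R -> 'cV[R]_N).
Hypothesis HL : (2 <= L)%N.
Hypothesis Hr : forall t : R, 0 < t ->
     derivable r t 1 /\
     derive1 r t = - (r t ^+ 2 * grad_r L A b (r t) (u t)).
Hypothesis Hu : forall t : R, 0 < t -> forall i : 'I_N,
     derivable (fun s => u s i 0) t 1 /\
     derive1 (fun s => u s i 0) t = - grad_u L A b (r t) (u t) i.
Hypothesis Hr0 : r x @[x --> 0^'+] --> r 0.
Hypothesis Hu0 : forall i : 'I_N, u x i 0 @[x --> 0^'+] --> u 0 i 0.
Hypothesis r0 : 0 < r 0.
Hypothesis u0 : forall i : 'I_N, 0 < u 0 i 0.
Hypothesis un : norm2 (u 0) = 1.
Variable z : 'cV[R]_N.
Hypothesis Az : A *m z = b.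

Let inv := @invariant _ _ _ L A b r u HL Hr Hu Hr0 Hu0 r0 u0 un.
Let dyn := @dyn1 _ _ _ L A b r u HL Hr Hu.

Definition xi (i : 'I_N) (s : R) := (r s * u s i 0) ^+ L.

Lemma wn1 (s : R) : 0 < s -> wn (r s) (u s) = r s *: u s.
Proof.
move=> s0; have [_ S1] := inv _ s0.
by rewrite /wn norm2_S2 S1 sqrtr1 divr1.
Qed.

Lemma xi_pos (s : R) i : 0 < s -> 0 < xi i s.
Proof. by move=> s0; have [[rp up] _] := inv _ s0; rewrite exprn_gt0 // mulr_gt0. Qed.

Definition G (s : R) := Fpot L z - \sum_i F1 L (xi i s)
   - \sum_i dF L (xi i s) * (z i 0 - xi i s).

Lemma G_near (t : R) : 0 < t ->
  \forall s \near t, G s = bregman L z (epow L (wn (r s) (u s))).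
Proof.
move=> t0; near=> s.
have s0 : 0 < s by near: s; exact: near_pos.
have qE : forall i, epow L (wn (r s) (u s)) i 0 = xi i s.
  by move=> i; rewrite /epow mxE wn1 // mxE.
rewrite /bregman (Fpot_E L (epow _ _)) /G.
congr (_ - _ - _); apply: eq_bigr => i _.
  by rewrite qE.
rewrite partial_Fpot ?qE // => j; rewrite qE; exact: xi_pos.
Unshelve. all: by end_near. Qed.

Lemma final (t : R) : 0 < t ->
  derivable (fun s => bregman L z (epow L (wn (r s) (u s)))) t 1 /\
  derive1 (fun s => bregman L z (epow L (wn (r s) (u s)))) t
    = - (2 * L%:R * norm2 (wn (r t) (u t)) ^+ 2 * loss L A b (wn (r t) (u t))).
Proof.
move=> t0.
have [[rp up] S1] := inv _ t0.
have [Dr Du] := dyn _ t0 S1.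
pose y i := r t * u t i 0.
pose yd i := r t * (u t i 0 * ku L A b r u i t) + u t i 0 * (r t * kr L A b r u t).
pose hi i := hh L A b (r t *: u t) i.
have ydE : forall i, yd i = - r t ^+ 2 * y i ^+ L.-1 * hi i.
  move=> i; rewrite /yd /y /hi /ku /kr.
  case: L HL => [|[|l]] // _.
  rewrite /= subn2 /= !exprS !exprMn; ring.
pose X' i := L%:R * y i ^+ L.-1 * yd i.
have HX : forall i, is_derive t 1 (xi i) (X' i).
  by move=> i; exact: (isd_exp L (isd_mul Dr (Du i))).
have xp : forall i, 0 < xi i t by move=> i; exact: xi_pos.
have HF : forall i, is_derive t 1 (fun s => F1 L (xi i s)) (dF L (xi i t) * X' i).
  by move=> i; exact: (isd_comp (F1_isd L _ (xp i)) (HX i)).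
have HD : forall i, is_derive t 1 (fun s => dF L (xi i s)) (ddF L (xi i t) * X' i).
  by move=> i; exact: (isd_comp (dF_isd L _ (xp i)) (HX i)).
have HP : forall i, is_derive t 1 (fun s => dF L (xi i s) * (z i 0 - xi i s))
    (dF L (xi i t) * (0 - X' i) + (z i 0 - xi i t) * (ddF L (xi i t) * X' i)).
  by move=> i; exact: (isd_mul (HD i) (isd_sub (isd_cst (z i 0) t) (HX i))).
have HG := isd_sub (isd_sub (isd_cst (Fpot L z) t) (isd_sum HF)) (isd_sum HP).
have HB := isd_near (G_near _ t0) HG.
have [dB ->] := isd_val HB.
split => //.
have key : forall i, ddF L (xi i t) * X' i = - r t ^+ 2 * hi i.
  move=> i; rewrite /X' ydE /xi -/(y i).
  have yp : 0 < y i by rewrite mulr_gt0.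
  have := ddF_id L HL _ yp.
  have -> : (2 * L - 2)%N = (L.-1 + L.-1)%N by lia.
  rewrite exprD => E.
  have Ln0 : (L%:R : R) != 0 by rewrite pnatr_eq0 -lt0n ltnW.
  transitivity (- r t ^+ 2 * hi i * (L%:R * (ddF L (y i ^+ L) * (y i ^+ L.-1 * y i ^+ L.-1)))); first ring.
  by rewrite E mulfV // mulr1.
have E1 : 0 - \sum_i dF L (xi i t) * X' i -
    \sum_i (dF L (xi i t) * (0 - X' i) + (z i 0 - xi i t) * (ddF L (xi i t) * X' i))
   = r t ^+ 2 * \sum_i hi i * (z i 0 - xi i t).
  rewrite sub0r -opprD -big_split /= big_distrr /= -sumrN; apply: eq_bigr => i _.
  rewrite key; ring.
rewrite E1.
have Hb : forall j, \sum_i A j i * z i 0 = b j 0.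
  by move=> j; rewrite -Az mxE.
have Hev : forall j, \sum_i A j i * xi i t = ev L A b (r t *: u t) j + b j 0.
  move=> j; rewrite /ev subrK; apply: eq_bigr => i _; rewrite mxE.
  done.
have E2 : \sum_i hi i * (z i 0 - xi i t) = - \sum_j ev L A b (r t *: u t) j ^+ 2.
  rewrite /hi /hh.
  under eq_bigr do rewrite big_distrl /=.
  rewrite exchange_big /= -sumrN; apply: eq_bigr => j _.
  have -> : \sum_i A j i * ev L A b (r t *: u t) j * (z i 0 - xi i t) =
     ev L A b (r t *: u t) j * (\sum_i A j i * z i 0 - \sum_i A j i * xi i t).
    rewrite mulrBr !big_distrr -sumrB /=; apply: eq_bigr => i _; ring.
  rewrite Hb Hev; ring.
rewrite E2 wn1 // loss_E.
have n2 : norm2 (r t *: u t) ^+ 2 = r t ^+ 2.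
  rewrite /norm2 sqr_sqrtr; last by rewrite sumr_ge0 // => i _; rewrite sqr_ge0.
  rewrite -[RHS]mulr1 -S1 /S2 big_distrr /=; apply: eq_bigr => i _; rewrite mxE; ring.
rewrite n2.
have Ln0 : (L%:R : R) != 0 by rewrite pnatr_eq0 -lt0n ltnW.
field; exact: Ln0.
Qed.

End Final.

Theorem mainTheorem17 (R : realType) (M N L : nat) (A : 'M[R]_(M, N)) (b : 'cV[R]_M)
  (r : R -> R) (u : R -> 'cV[R]_N) :
  (2 <= L)%N ->
  (* weight-normalized gradient flow, eta_r(t) = r(t)^2, eta_u = 1, for t > 0 *)
  (forall t : R, 0 < t ->
     derivable r t 1 /\
     derive1 r t = - (r t ^+ 2 * grad_r L A b (r t) (u t))) ->
  (forall t : R, 0 < t -> forall i : 'I_N,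
     derivable (fun s => u s i 0) t 1 /\
     derive1 (fun s => u s i 0) t = - grad_u L A b (r t) (u t) i) ->
  (* the trajectory starts at (r(0), u(0)) *)
  r x @[x --> 0^'+] --> r 0 ->
  (forall i : 'I_N, u x i 0 @[x --> 0^'+] --> u 0 i 0) ->
  0 < r 0 ->
  (forall i : 'I_N, 0 < u 0 i 0) ->
  norm2 (u 0) = 1 ->
  forall z : 'cV[R]_N, (forall i : 'I_N, 0 <= z i 0) -> A *m z = b ->
  forall t : R, 0 < t ->
    derivable (fun s => bregman L z (epow L (wn (r s) (u s)))) t 1 /\
    derive1 (fun s => bregman L z (epow L (wn (r s) (u s)))) t
      = - (2 * L%:R * norm2 (wn (r t) (u t)) ^+ 2 * loss L A b (wn (r t) (u t))).
Proof.
move=> HL Hr Hu Hr0 Hu0 r0 u0 un z _ Az t t0.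
exact: (@final R M N L A b r u HL Hr Hu Hr0 Hu0 r0 u0 un z Az t t0).
Qed.
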